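(* Let $A\in\tilde\omega_n^{0,1}$ and suppose $G_A$ contains a directed cycle $C$: $v_{i_1}\to v_{i_2}\to\cdots\to v_{i_r}\to v_{i_1}$ with edge weights $a_{i_1i_2},\dots,a_{i_ri_1}$. Let $\tilde A$ be the $(n-r)\times(n-r)$ principal submatrix of $A$ obtained by deleting rows and columns $i_1,\dots,i_r$ (with $\operatorname{per}$ of the empty matrix equal to $1$). Then $$\operatorname{per}(I-A)=\operatorname{per}(I-\tilde A)\,\big(1+(-1)^r a_{i_1i_2}a_{i_2i_3}\cdots a_{i_ri_1}\big).$$
   Context: An $n\times n$ matrix is row substochastic if all its entries are nonnegative and each row sum is at most $1$. $\tilde\omega_n^{0,1}$ denotes the set of all $n\times n$ row substochastic matrices with zero main diagonal and at most one positive entry in each row. For an $n\times n$ matrix $A=[a_{ij}]$, $G_A$ is the directed weighted graph on vertices $v_1,\dots,v_n$ having a directed edge $v_i\to v_j$ of weight $a_{ij}$ exactly when $a_{ij}\ne 0$. The permanent is $\operatorname{per}(M)=\sum_{\pi\in S_n}\prod_i m_{i\pi(i)}$, and $I$ denotes an identity matrix of the appropriate size. *)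

(* Defs.v *)
From HB Require Import structures.
From mathcomp Require Import all_boot all_order.
From mathcomp Require Import fingroup perm.
From mathcomp Require Import all_algebra.
Set Implicit Arguments. Unset Strict Implicit. Unset Printing Implicit Defensive.
Import Order.TTheory GRing.Theory Num.Theory.
Local Open Scope ring_scope.

Definition per (R : comPzRingType) (n : nat) (M : 'M[R]_n) : R :=
  \sum_(s : 'S_n) \prod_(i < n) M i (s i).

Definition row_substochastic (R : realFieldType) (n : nat) (A : 'M[R]_n) : Prop :=
  (forall i j, 0 <= A i j) /\ (forall i, \sum_(j < n) A i j <= 1).

Definition omega01 (R : realFieldType) (n : nat) (A : 'M[R]_n) : Prop :=
  [/\ row_substochastic A,
      (forall i, A i i = 0) &
      (forall i, #|[pred j | (0 < A i j)%R]| <= 1)%N].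

Definition GA_edge (R : realFieldType) (n : nat) (A : 'M[R]_n) : rel 'I_n :=
  fun i j => A i j != 0.

(* principal submatrix of A obtained by deleting the rows and columns
   with indices in s; indexed by the complement set, size #|~: s| = n - size s
   when s is duplicate-free *)
Definition del_principal (R : realFieldType) (n : nat) (A : 'M[R]_n)
    (s : seq 'I_n) : 'M[R]_#|[set x : 'I_n | x \notin s]| :=
  \matrix_(i, j) A (enum_val i) (enum_val j).

(* Main.v *)
Require Import Defs.
From HB Require Import structures.
From mathcomp Require Import all_boot all_order.
From mathcomp Require Import fingroup perm.
From mathcomp Require Import all_algebra.
Import Order.TTheory GRing.Theory Num.Theory.
Set Implicit Arguments. Unset Strict Implicit. Unset Printing Implicit Defensive.
Local Open Scope ring_scope.

Lemma fpath_all (T : eqType) (f : T -> T) (P : pred T) x q :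
  (forall y, P y -> P (f y)) -> fpath f x q -> P x -> all P q.
Proof.
move=> cl; move: x; elim: q => [//|y q IH] x /= /andP[/eqP <- Hp] Px.
have Pfx := cl _ Px; by rewrite Pfx (IH (f x)).
Qed.

Lemma cycle_closure (T : eqType) (C : seq T) (P : pred T) :
  uniq C -> (forall y, y \in C -> P y -> P (next C y)) ->
  forall x, x \in C -> P x -> forall y, y \in C -> P y.
Proof.
move=> U cl x xC Px y yC.
case: (rot_to xC) => i q Hr.
have U' : uniq (x :: q) by rewrite -Hr rot_uniq.
have := cycle_next U'; rewrite /= => Hp.
have : all [pred z | (z \in C) && P z] (rcons q x).
  apply: (@fpath_all _ (next (x :: q)) _ x) Hp _; last by rewrite /= xC Px.
  move=> z /andP[zC Pz]; rewrite -Hr (next_rot i U) /= mem_next zC.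
  exact: cl.
move/allP => /(_ y); rewrite mem_rcons -Hr mem_rot yC => /(_ isT).
by case/andP.
Qed.

Definition extf n (T : {set 'I_n}) (p : 'S_#|T|) (x : 'I_n) : 'I_n :=
  if (insub (index x (enum T)) : option 'I_#|T|) is Some i
  then enum_val (p i) else x.

Lemma insub_ev n (T : {set 'I_n}) (j : 'I_#|T|) :
  (insub (index (enum_val j) (enum T)) : option 'I_#|T|) = Some j.
Proof.
have -> : index (enum_val j) (enum T) = j.
  by rewrite (enum_val_nth (enum_val j)) index_uniq ?enum_uniq // -cardE.
exact: valK.
Qed.

Lemma insub_notin n (T : {set 'I_n}) x : x \notin T ->
  (insub (index x (enum T)) : option 'I_#|T|) = None.
Proof.
by move=> xT; apply: insubF; rewrite memNindex ?mem_enum // -cardE ltnn.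
Qed.

Lemma extf_ev n (T : {set 'I_n}) (p : 'S_#|T|) (j : 'I_#|T|) : extf p (enum_val j) = enum_val (p j).
Proof. by rewrite /extf insub_ev. Qed.

Lemma extf_out n (T : {set 'I_n}) (p : 'S_#|T|) x : x \notin T -> extf p x = x.
Proof. by move=> xT; rewrite /extf insub_notin. Qed.

Lemma in_ev n (T : {set 'I_n}) x : x \in T -> exists j : 'I_#|T|, x = enum_val j.
Proof. by move=> xT; exists (enum_rank_in xT x); rewrite enum_rankK_in. Qed.

Lemma extf_inj n (T : {set 'I_n}) (p : 'S_#|T|) : injective (extf p).
Proof.
move=> x y.
case: (boolP (x \in T)) => [/in_ev [i ->]| xT];
  case: (boolP (y \in T)) => [/in_ev [j ->]| yT].
- by rewrite !extf_ev => /enum_val_inj /perm_inj ->.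
- by rewrite extf_ev (extf_out _ yT) => E; rewrite -E enum_valP in yT.
- by rewrite extf_ev (extf_out _ xT) => E; rewrite E enum_valP in xT.
- by rewrite !extf_out.
Qed.

Definition ext n (T : {set 'I_n}) (p : 'S_#|T|) : 'S_n := perm (@extf_inj n T p).

Lemma sum_fixT (R : comPzRingType) n (M : 'M[R]_n) (T : {set 'I_n}) :
  (forall i, i \notin T -> M i i = 1) ->
  \sum_(t : 'S_n | [forall x, (x \notin T) ==> (t x == x)])
      \prod_(i < n) M i (t i) =
  \sum_(p : 'S_#|T|) \prod_(j < #|T|) M (enum_val j) (enum_val (p j)).
Proof.
move=> Mii.
have -> : \sum_(t : 'S_n | [forall x, (x \notin T) ==> (t x == x)])
      \prod_(i < n) M i (t i) =
   \sum_(t in [set ext p | p in [set: 'S_#|T|]]) \prod_(i < n) M i (t i).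
  apply: eq_bigl => t; apply/idP/imsetP.
  - move=> ft.
    have tT : forall j : 'I_#|T|, t (enum_val j) \in T.
      move=> j; case: (boolP (t (enum_val j) \in T)) => // H.
      have /eqP/perm_inj E := implyP (forallP ft _) H.
      by rewrite E enum_valP in H.
    pose pf (j : 'I_#|T|) := odflt j (insub (index (t (enum_val j)) (enum T)) : option 'I_#|T|).
    have pfE : forall j : 'I_#|T|, enum_val (pf j) = t (enum_val j).
      by move=> j; rewrite /pf; have [k Ek] := in_ev (tT j); rewrite Ek insub_ev.
    have pfinj : injective pf.
      by move=> i j /(congr1 enum_val); rewrite !pfE => /perm_inj/enum_val_inj.
    exists (perm pfinj); first by rewrite in_setT.
    apply/permP => x; rewrite permE.
    case: (boolP (x \in T)) => [/in_ev [j ->] | xT].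
      by rewrite extf_ev permE pfE.
    by rewrite extf_out // (eqP (implyP (forallP ft x) xT)).
  - move=> [p _ ->]; apply/forallP => x; apply/implyP => xT.
    by rewrite permE extf_out.
rewrite big_imset /=; last first.
  move=> p q _ _ E; apply/permP => j; apply: enum_val_inj.
  by move/permP: E => /(_ (enum_val j)); rewrite !permE !extf_ev.
rewrite (eq_bigl predT); last by move=> p; rewrite in_setT.
apply: eq_bigr => p _.
rewrite (bigID (fun i => i \in T)) /= [X in _ * X]big1 ?mulr1; last first.
  by move=> i iT; rewrite permE extf_out // Mii.
rewrite big_enum_val; apply: eq_bigr => j _.
by rewrite permE extf_ev.
Qed.

Theorem mainTheorem6 (R : realFieldType) (n : nat) (A : 'M[R]_n)
    (C : seq 'I_n) :
  omega01 A ->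
  C != [::] -> uniq C -> path.cycle (GA_edge A) C ->
  per (1%:M - A) =
    per (1%:M - del_principal A C) *
      (1 + (-1) ^+ size C * \prod_(i <- C) A i (next C i)).
Proof.
move=> [[nneg _] diag card1] CN0 U Hcyc.
set M := 1%:M - A.
have edge : forall c, c \in C -> A c (next C c) != 0.
  by move=> c cC; exact: (next_cycle Hcyc cC).
have entry : forall c j, c \in C -> A c j != 0 -> j = next C c.
  move=> c j cC Aj.
  have pos : forall k, A c k != 0 -> k \in [pred k | 0 < A c k].
    by move=> k Ak; rewrite inE lt_def Ak nneg.
  by move/card_le1_eqP: (card1 c) => H; symmetry; apply: H; [exact: pos | exact: pos (edge c cC)].
have nxt : forall c, c \in C -> next C c != c.
  by move=> c cC; apply: contraNneq (edge c cC) => ->; rewrite diag.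
have Mcc : forall c j, c \in C -> M c j != 0 -> (j == c) || (j == next C c).
  move=> c j cC; rewrite /M !mxE; have [->|ne] := eqVneq c j; first by [].
  rewrite (_ : false%:R = 0 :> R) // sub0r oppr_eq0 => /(entry _ _ cC) ->.
  by rewrite eqxx orbT.
have Mii : forall i, M i i = 1 by move=> i; rewrite /M !mxE eqxx diag subr0.
pose rho : 'S_n := perm (can_inj (prev_next U)).
have rhoE : forall x, rho x = next C x by move=> x; rewrite permE.
pose fixC (s : 'S_n) := [forall x, (x \in C) ==> (s x == x)].
pose agr (s : 'S_n) := [forall x, (x \in C) ==> (s x == next C x)].
pose F (s : 'S_n) := \prod_(i < n) M i (s i).
have [c0 c0C] : exists c0, c0 \in C.
  by case E: C CN0 => [|c q] // _; exists c; rewrite mem_head.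
have key : forall s, F s != 0 -> ~~ fixC s -> agr s.
  move=> s Fs nf.
  have Hs : forall i, M i (s i) != 0.
    move=> i; apply: contra Fs => /eqP H.
    by rewrite /F (bigD1 i) //= H mul0r.
  move/forallPn: nf => [d]; rewrite negb_imply => /andP[dC sd].
  apply/forallP => y; apply/implyP => yC.
  pose P := [pred z | s z == next C z].
  apply: (@cycle_closure _ C P U _ d dC _ y yC).
    move=> z zC /eqP Pz; rewrite /P /=.
    have nzC : next C z \in C by rewrite mem_next.
    case/orP: (Mcc _ _ nzC (Hs (next C z))) => // /eqP E.
    have E' : s (next C z) = s z by rewrite E Pz.
    by move/perm_inj: E' => E'; move: (nxt _ zC); rewrite E' eqxx.
  rewrite /P /=; case/orP: (Mcc _ _ dC (Hs d)) => //.
  by rewrite (negbTE sd).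
have tnotC : forall t i, fixC t -> i \notin C -> t i \notin C.
  move=> t i ft iC; apply/negP => tiC.
  have /eqP/perm_inj E := implyP (forallP ft _) tiC.
  by rewrite E in tiC; rewrite tiC in iC.
have H2 : \sum_(s | ~~ fixC s) F s = \sum_(s | agr s) F s.
  rewrite (bigID agr) /= [X in _ + X]big1 ?addr0; last first.
    move=> s /andP[nf na]; case: (F s =P 0) => // /eqP Fs.
    by rewrite key in na.
  apply: eq_bigl => s; case As: (agr s); rewrite ?andbF // andbT.
  apply/negP => fs.
  have := implyP (forallP As c0) c0C; rewrite (eqP (implyP (forallP fs c0) c0C)).
  by rewrite eq_sym (negbTE (nxt _ c0C)).
pose Pc := \prod_(i in C) M i (next C i).
have H3 : \sum_(s | agr s) F s = Pc * \sum_(t | fixC t) F t.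
  rewrite (reindex_inj (mulIg rho)) big_distrr /=.
  symmetry; apply: eq_big => t.
    apply: eq_forallb => x; rewrite permM rhoE.
    by rewrite (inj_eq (can_inj (prev_next U))).
  move=> ft; symmetry; rewrite /F.
  rewrite (bigID (fun i => i \in C)) /= [X in _ = _ * X](bigID (fun i => i \in C)) /=.
  rewrite [X in _ = _ * (X * _)]big1 ?mul1r; last first.
    by move=> i iC; rewrite (eqP (implyP (forallP ft i) iC)) Mii.
  congr (_ * _).
    by apply: eq_bigr => i iC; rewrite permM rhoE (eqP (implyP (forallP ft i) iC)).
  apply: eq_bigr => i iC; rewrite permM rhoE next_nth.
  by rewrite (negbTE (tnotC _ _ ft iC)).
have HQ : \sum_(t | fixC t) F t = per (1%:M - del_principal A C).
  rewrite /per /F.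
  rewrite (eq_bigl (fun t : 'S_n => [forall x, (x \notin [set x : 'I_n | x \notin C]) ==> (t x == x)])); last first.
    by move=> t; apply: eq_forallb => x; rewrite inE negbK.
  rewrite sum_fixT; last by move=> i _; rewrite Mii.
  apply: eq_bigr => p _; apply: eq_bigr => j _.
  by rewrite /M !mxE (inj_eq enum_val_inj).
have HP : Pc = (-1) ^+ size C * \prod_(i <- C) A i (next C i).
  rewrite big_uniq // /Pc.
  rewrite (eq_bigr (fun i => - A i (next C i))); last first.
    by move=> i iC; rewrite /M !mxE eq_sym (negbTE (nxt _ iC)) sub0r.
  by rewrite prodrN (card_uniqP U).
rewrite -HQ -HP.
have -> : per M = \sum_s F s by [].
rewrite (bigID fixC) /= H2 H3.
by rewrite mulrDr mulr1 mulrC.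
Qed.
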